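(* There is a circuit with $O(n)$ generalized boolean gates and depth $O(\log n)$ that solves the generalized binary-to-unary conversion problem on $n$ receivers: given indicator bits $x[1],\dots,x[n]$ and an integer $\ell\in\{0,1,\dots,n\}$ in binary, it outputs bits $y[1],\dots,y[n]$ such that among the indices $i$ with $x[i]=1$, the first $\ell$ such indices (in increasing order) have $y[i]=1$ and all the others have $y[i]=0$ (indices with $x[i]=0$ may receive arbitrary bits).
   Context: A generalized boolean gate has constant fan-in and constant fan-out and computes an arbitrary fixed truth table. Depth is the longest input-to-output path length. *)

(* Defs.v *)
From mathcomp Require Import all_boot.
Set Implicit Arguments. Unset Strict Implicit. Unset Printing Implicit Defensive.

Record gate := Gate { gate_ins : seq nat ; gate_fn : seq bool -> bool }.

(* A circuit with [c_nin] input wires.  Wires are numbered: 0 .. c_nin-1 are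
   the inputs, c_nin + j is the output of gate j.  [c_outs] lists the output
   wires. *)
Record circuit := Circuit {
  c_nin : nat ;
  c_gates : seq gate ;
  c_outs : seq nat }.

Definition wf_circuit (C : circuit) : Prop :=
  (forall j, j < size (c_gates C) ->
     all (fun w => w < c_nin C + j) (gate_ins (nth (Gate [::] (fun _ => false)) (c_gates C) j)))
  /\ all (fun w => w < c_nin C + size (c_gates C)) (c_outs C).

Definition wire_values (C : circuit) (inp : seq bool) : seq bool :=
  foldl (fun vals g => rcons vals (gate_fn g [seq nth false vals w | w <- gate_ins g]))
        inp (c_gates C).

Definition eval_circuit (C : circuit) (inp : seq bool) : seq bool :=
  [seq nth false (wire_values C inp) w | w <- c_outs C].

Definition wire_depths (C : circuit) : seq nat :=
  foldl (fun ds g => rcons ds (\max_(w <- gate_ins g) nth 0 ds w).+1)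
        (nseq (c_nin C) 0) (c_gates C).

Definition depth (C : circuit) : nat := \max_(w <- c_outs C) nth 0 (wire_depths C) w.

Definition size_circuit (C : circuit) : nat := size (c_gates C).

(* Every gate has fan-in at most c and fan-out (number of gate input slots
   reading its output) at most c. *)
Definition bounded_fan (c : nat) (C : circuit) : Prop :=
  all (fun g => size (gate_ins g) <= c) (c_gates C) /\
  (forall j, j < size (c_gates C) ->
     sumn [seq count (pred1 (c_nin C + j)) (gate_ins g) | g <- c_gates C] <= c).

Definition nbits (n : nat) : nat := (trunc_log 2 n).+1.

Definition bin (m l : nat) : seq bool := [seq odd (l %/ 2 ^ i) | i <- iota 0 m].

Definition solves_b2u (n : nat) (C : circuit) : Prop :=
  c_nin C = n + nbits n /\ size (c_outs C) = n /\
  forall (x : seq bool) (l : nat), size x = n -> l <= n ->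
    let y := eval_circuit C (x ++ bin (nbits n) l) in
    forall i, i < n -> nth false x i ->
      nth false y i = (count id (take i x) < l).

(* Main.v *)
Require Import Defs.
From mathcomp Require Import all_boot zify.
Set Implicit Arguments. Unset Strict Implicit. Unset Printing Implicit Defensive.

Section Fold.
Variables (A B : Type) (F : B -> seq A -> A) (x0 : A).
Definition stp (vs : seq A) (g : B) := rcons vs (F g vs).

Lemma size_fold gs init : size (foldl stp init gs) = size init + size gs.
Proof. elim: gs init => [|g gs IH] init /=; first by rewrite addn0.
by rewrite IH size_rcons addSnnS. Qed.

Lemma nth_fold_pre gs init i : i < size init -> nth x0 (foldl stp init gs) i = nth x0 init i.
Proof. elim: gs init => [|g gs IH] init //= Hi.
rewrite IH; first by rewrite /stp nth_rcons Hi.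
by rewrite size_rcons ltnS ltnW. Qed.
Lemma nth_fold_gate gs init j g0 : j < size gs ->
  nth x0 (foldl stp init gs) (size init + j) =
  F (nth g0 gs j) (foldl stp init (take j gs)).
Proof. move=> Hj.
rewrite -{1}(cat_take_drop j gs) foldl_cat.
rewrite (drop_nth g0 Hj) /= nth_fold_pre; last by rewrite size_rcons size_fold size_take Hj.
by rewrite /stp nth_rcons size_fold size_take Hj ltnn eqxx.
Qed.

Lemma nth_fold_take gs init j i : j <= size gs -> i < size init + j ->
  nth x0 (foldl stp init gs) i = nth x0 (foldl stp init (take j gs)) i.
Proof. move=> Hj Hi.
by rewrite -{1}(cat_take_drop j gs) foldl_cat nth_fold_pre // size_fold size_takel.
Qed.
End Fold.
Definition val (m : nat) (f : nat -> bool) : nat := \sum_(j < m) f j * 2 ^ j.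

Lemma valS m f : val m.+1 f = val m f + f m * 2 ^ m.
Proof. by rewrite /val big_ord_recr. Qed.

Lemma val0 f : val 0 f = 0. Proof. by rewrite /val big_ord0. Qed.

Lemma val_lt m f : val m f < 2 ^ m.
Proof. elim: m => [|m IH]; first by rewrite val0.
rewrite valS expnS; case: (f m); lia. Qed.

Lemma eq_val m f g : (forall j, j < m -> f j = g j) -> val m f = val m g.
Proof. move=> H; apply: eq_bigr => i _; by rewrite H. Qed.

Definition cin (C : nat -> bool) j := if j is j'.+1 then C j' else false.

Lemma adder m f g S C :
  (forall j, j < m -> S j = f j (+) g j (+) cin C j) ->
  (forall j, j < m -> C j = [|| f j && g j, f j && cin C j | g j && cin C j]) ->
  val m f + val m g = val m S + cin C m * 2 ^ m.
Proof. elim: m => [|m IH] HS HC; first by rewrite !val0.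
rewrite !valS.
have E : f m + g m + cin C m = S m + 2 * C m.
  by rewrite HS // HC //; case: (f m); case: (g m); case: (cin C m).
have IH' := IH (fun j Hj => HS j (ltnW Hj)) (fun j Hj => HC j (ltnW Hj)).
rewrite /= expnS. nia. Qed.

Lemma subtr m a b T C :
  (forall j, j < m -> T j = a j (+) b j (+) cin C j) ->
  (forall j, j < m -> C j = (~~ a j && (b j || cin C j)) || (b j && cin C j)) ->
  val m a + cin C m * 2 ^ m = val m b + val m T.
Proof. elim: m => [|m IH] HS HC; first by rewrite !val0.
rewrite !valS.
have E : a m + 2 * C m = b m + cin C m + T m.
  by rewrite HS // HC //; case: (a m); case: (b m); case: (cin C m).
have IH' := IH (fun j Hj => HS j (ltnW Hj)) (fun j Hj => HC j (ltnW Hj)).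
rewrite /= expnS. nia. Qed.

Lemma nzchain m T Z :
  (forall j, j <= m -> Z j = cin Z j || T j) -> Z m = (0 < val m.+1 T).
Proof. elim: m => [|m IH] H.
  by rewrite H // /= valS val0 /=; case: (T 0).
rewrite H // /= IH; last by move=> j Hj; apply: H; rewrite ltnW.
rewrite (valS m.+1); have := expn_gt0 2 m.+1; case: (T m.+1) => /=; lia.
Qed.

Lemma val_bits m l : val m (fun j => odd (l %/ 2 ^ j)) + (l %/ 2 ^ m) * 2 ^ m = l.
Proof. elim: m => [|m IH]; first by rewrite val0 expn0 divn1 muln1.
rewrite valS expnS (mulnC 2) divnMA.
have := odd_double_half (l %/ 2 ^ m). rewrite -muln2. lia. Qed.

Lemma val_top m f : val m.+1 f < 2 ^ m -> f m = false /\ val m.+1 f = val m f.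
Proof. rewrite valS; case: (f m) => //=; lia. Qed.

Lemma val_topbit m f : f m = (2 ^ m <= val m.+1 f).
Proof. rewrite valS; have := val_lt m f; case: (f m) => /=; lia. Qed.

Definition lab := (nat * nat * nat * nat)%type.
Definition src := (nat + lab)%type.

Fixpoint expand (os : seq (option src)) (v : seq bool) : seq bool :=
  match os with
  | [::] => [::]
  | None :: os' => false :: expand os' v
  | Some _ :: os' => head false v :: expand os' (behead v)
  end.

Lemma expand_map (f : src -> bool) os :
  expand os [seq f s | s <- pmap id os] = [seq oapp f false o | o <- os].
Proof. by elim: os => [|[s|] os IH] //=; rewrite IH. Qed.

Section Cons.
Variable n : nat.
Local Notation K := (nbits n).
Definition nin := n + K.

Definition cnt h a j : option src :=
  match h with
  | 0 => if (j == 0) && (a < n) then Some (inl a) else None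
  | _.+1 => if j <= h then Some (inr (0, h, a, j)) else None
  end.

Definition rpsrc h a j : option src :=
  if h == K then (if j < K then Some (inl (n + j)) else None)
  else Some (inr (2, h.+1, a./2, j)).
Definition stsrc t h a : option src :=
  if h == K then None else Some (inr (t, h.+1, a./2, 0)).
Definition chain t h a j : option src :=
  if j is j'.+1 then Some (inr (t, h, a, j')) else None.

Definition lins (g : lab) : seq (option src) :=
  let: (t, h, a, j) := g in
  match t with
  | 0 | 1 => match h with 0 => [::]
             | h'.+1 => [:: cnt h' a.*2 j; cnt h' a.*2.+1 j; chain 1 h a j] end
  | 2 | 3 => [:: rpsrc h a j; if odd a then cnt h a.-1 j else None; chain 3 h a j]
  | 4 => [:: chain 4 h a j; Some (inr (2, h, a, j))]
  | 5 => if j == 0 then [:: stsrc 5 h a; stsrc 6 h a; Some (inr (2, h, a, h.+1));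
                          Some (inr (4, h, a, h.+1))] else [::]
  | _ => if j == 0 then [:: stsrc 5 h a; stsrc 6 h a; Some (inr (2, h, a, h.+1));
                          Some (inr (2, h, a, h))] else [::]
  end.

Definition fn (g : lab) (v : seq bool) : bool :=
  let b i := nth false v i in
  match g.1.1.1 with
  | 0 | 2 => b 0 (+) b 1 (+) b 2
  | 1 => [|| b 0 && b 1, b 0 && b 2 | b 1 && b 2]
  | 3 => (~~ b 0 && (b 1 || b 2)) || (b 1 && b 2)
  | 4 => b 0 || b 1
  | 5 => b 0 || (~~ b 1 && (b 2 || ~~ b 3))
  | _ => b 1 || [&& ~~ b 0, ~~ b 2 & b 3]
  end.

Definition Base := K.*2.+2.
Definition rank (g : lab) : nat :=
  let: (t, h, a, j) := g in
  match t with
  | 0 | 1 => h + j + 1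
  | 2 | 3 => Base + (K - h) + j
  | 4 => Base + (K - h) + j + 1
  | _ => Base + K.*2 + 3 - h
  end.

Definition inL (g : lab) : bool :=
  let: (t, h, a, j) := g in [&& t < 7, h <= K, a < 2 ^ (K - h) & j <= h.+1].

Definition Ldep : seq lab :=
  flatten [seq flatten [seq flatten [seq [seq (t, h, a, j) | j <- iota 0 h.+2]
     | a <- iota 0 (2 ^ (K - h))] | h <- iota 0 K.+1] | t <- iota 0 7].

Definition leR (x y : lab) := rank x <= rank y.
Definition L := sort leR (undup Ldep).

Definition wire (s : src) : nat := match s with inl i => i | inr g => nin + index g L end.

Definition mkgate (g : lab) : gate :=
  Gate [seq wire s | s <- pmap id (lins g)] (fun v => fn g (expand (lins g) v)).

Definition circ : circuit :=
  Circuit nin (map mkgate L) [seq wire (inr (6, 0, i, 0)) | i <- iota 0 n].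

Lemma mem_L g : (g \in L) = inL g.
Proof.
rewrite mem_sort mem_undup.
apply/idP/idP.
- case/flatten_mapP => t; rewrite mem_iota => /andP [_ Ht].
  case/flatten_mapP => h; rewrite mem_iota => /andP [_ Hh].
  case/flatten_mapP => a; rewrite mem_iota => /andP [_ Ha].
  case/mapP => j; rewrite mem_iota => /andP [_ Hj] ->.
  rewrite /= Ht Ha; lia.
- case: g => [[[t h] a] j] /and4P [Ht Hh Ha Hj].
  apply/flatten_mapP; exists t; first by rewrite mem_iota.
  apply/flatten_mapP; exists h; first by rewrite mem_iota; lia.
  apply/flatten_mapP; exists a; first by rewrite mem_iota.
  apply/mapP; exists j => //; rewrite mem_iota; lia.
Qed.

Lemma uniq_L : uniq L.
Proof. by rewrite sort_uniq undup_uniq. Qed.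

Lemma sorted_L : sorted leR L.
Proof. apply: sort_sorted => x y; rewrite /leR; exact: leq_total. Qed.

Lemma index_lt_rank x y : x \in L -> y \in L -> rank x < rank y -> index x L < index y L.
Proof.
move=> Hx Hy Hr; rewrite ltnNge; apply/negP => Hle.
have Htr : transitive leR by move=> a b c; rewrite /leR; exact: leq_trans.
have := @sorted_leq_nth _ leR Htr (fun a => leqnn _) x _ sorted_L (index y L) (index x L).
rewrite !inE !index_mem Hx Hy !nth_index // => /(_ isT isT Hle).
rewrite /leR; lia.
Qed.

Lemma pow_half h a : h < K -> a < 2 ^ (K - h) -> a./2 < 2 ^ (K - h.+1).
Proof. move=> Hh Ha. have E : K - h = (K - h.+1).+1 by lia.
rewrite E expnS in Ha. rewrite -divn2 ltn_divLR //; lia. Qed.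

Lemma pow_dbl h a : h.+1 <= K -> a < 2 ^ (K - h.+1) -> a.*2.+1 < 2 ^ (K - h).
Proof. move=> Hh Ha. have E : K - h = (K - h.+1).+1 by lia.
rewrite E expnS; lia. Qed.

Definition reader (w g : lab) : bool :=
  let: (t, h, a, j) := w in let: (t', h', a', j') := g in
  [&& t' < 7, h' \in [:: h.+1; h; h.-1], a' \in [:: a./2; a; a.+1; a.*2; a.*2.+1]
    & j' \in [:: 0; j; j.+1]].

Definition refok (g : lab) (o : option src) : Prop :=
  match o with None => True | Some (inl i) => i < nin
  | Some (inr w) => [/\ inL w, rank w < rank g & reader w g] end.

Lemma refs g o : inL g -> o \in lins g -> refok g o.
Proof.
case: g => [[[t h] a] j] /and4P[Ht Hh Ha Hj].
case: t Ht => [|[|[|[|[|[|[|t]]]]]]] Ht //= Ho.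
all: try (destruct h as [|h]; first by []).
all: try (destruct (j == 0) eqn:Ej; last by []).
all: rewrite ?inE in Ho.
all: repeat (case/orP: Ho => [/eqP -> | Ho]); try (move/eqP: Ho => ->).
all: rewrite /cnt /rpsrc /stsrc /chain /refok.
all: repeat match goal with
 | |- context [if ?b then _ else _] => destruct b eqn:?
 | |- context [match ?j with 0 => _ | _.+1 => _ end] => is_var j; destruct j
end.
all: rewrite /= ?inE; try done.
all: try (move/eqP: Ej => Ej; subst j).
all: repeat match goal with H : (_ && _) = true |- _ => case/andP: H => ? ? end.
all: rewrite ?/nin; try lia.
all: split; [apply/and3P; split | | apply/and3P; split]; rewrite ?inE; try lia.
all: rewrite /Base; try lia.
all: first [ have := @pow_dbl h.+1 a; lia | have := @pow_half h a; lia | have := @pow_half h.+1 a; lia].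

Qed.

Lemma inL_mem g : inL g -> g \in L. Proof. by rewrite mem_L. Qed.

Lemma nth_gates j : j < size L ->
  nth (Gate [::] (fun _ => false)) (c_gates circ) j = mkgate (nth (0,0,0,0) L j).
Proof. move=> Hj. by rewrite /circ /= (nth_map (0,0,0,0)). Qed.

Lemma ins_ok g w : g \in L -> w \in gate_ins (mkgate g) -> w < nin + index g L.
Proof.
move=> Hg /mapP [s]; rewrite mem_pmap map_id => Hs ->.
have := refs (o := Some s) (g := g); rewrite -mem_L => /(_ Hg Hs).
case: s Hs => [i|w'] Hs /=; first by move=> H; apply: leq_trans H (leq_addr _ _).
case; rewrite -mem_L => Hw Hr _. by rewrite ltn_add2l index_lt_rank.
Qed.

Lemma wf_circ : wf_circuit circ.
Proof.
split.
- move=> j; rewrite size_map => Hj; rewrite nth_gates //.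
  have Hg : nth (0,0,0,0) L j \in L by rewrite mem_nth.
  apply/allP => w /(ins_ok Hg). by rewrite index_uniq // uniq_L.
- apply/allP => w /mapP [i]; rewrite mem_iota add0n => Hi -> /=.
  rewrite size_map ltn_add2l index_mem mem_L /= leq0n /=.
  have := trunc_log_ltn n (isT : 1 < 2); rewrite /nbits subn0 => H.
  by rewrite (leq_trans Hi (ltnW H)).
Qed.

Lemma rank_pos g : inL g -> 0 < rank g.
Proof. case: g => [[[t h] a] j] /and4P [Ht Hh _ _].
case: t Ht => [|[|[|[|[|[|[|t]]]]]]] //= _; rewrite /Base; lia. Qed.

Section Eval.
Variable inp : seq bool.
Hypothesis Hinp : size inp = nin.
Definition vals := wire_values circ inp.
Definition V (g : lab) := nth false vals (nin + index g L).
Definition sv (s : src) := match s with inl i => nth false inp i | inr g => V g end.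
Definition ov (o : option src) := oapp sv false o.

Definition Fv (g : gate) (vs : seq bool) := gate_fn g [seq nth false vs w | w <- gate_ins g].

Lemma vals_in i : i < nin -> nth false vals i = nth false inp i.
Proof. move=> Hi. rewrite /vals /wire_values -/(stp Fv). by rewrite nth_fold_pre // Hinp. Qed.

Lemma gate_eq g : g \in L -> V g = fn g [seq ov o | o <- lins g].
Proof.
move=> Hg. have Hj : index g L < size (c_gates circ) by rewrite size_map index_mem.
rewrite /V /vals /wire_values -/(stp Fv) -{1}Hinp (@nth_fold_gate _ _ Fv false _ inp _ (Gate [::] (fun _ => false)) Hj).
rewrite nth_gates ?index_mem // nth_index // /Fv /mkgate /=.
rewrite -map_comp -expand_map; congr (fn g (expand _ _)).
apply/eq_in_map => s; rewrite mem_pmap map_id => Hs /=.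
have Hw : wire s \in gate_ins (mkgate g) by apply: map_f; rewrite mem_pmap map_id.
rewrite -(@nth_fold_take _ _ Fv false _ inp _ _ (ltnW Hj)); last by rewrite Hinp ins_ok.
rewrite -/(wire_values circ inp) -/vals.
case: s Hs Hw => [i|w] Hs Hw //=.
have := refs (o := Some (inl i)) (g := g); rewrite -mem_L => /(_ Hg Hs) /= Hi.
by rewrite vals_in.
Qed.
End Eval.

Definition Fd (g : gate) (ds : seq nat) := (\max_(w <- gate_ins g) nth 0 ds w).+1.

Lemma depth_le g : g \in L -> nth 0 (wire_depths circ) (nin + index g L) <= rank g.
Proof.
suff H : forall r g, rank g <= r -> g \in L -> nth 0 (wire_depths circ) (nin + index g L) <= rank g.
  by move=> Hg; apply: (H (rank g)).
elim=> [|r IH] {}g Hr Hg.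
  by have := rank_pos (g := g); rewrite -mem_L => /(_ Hg); lia.
have Hj : index g L < size (c_gates circ) by rewrite size_map index_mem.
have Hpos : 0 < rank g by have := rank_pos (g := g); rewrite -mem_L => /(_ Hg).
rewrite /wire_depths -/(stp Fd).
rewrite -[X in nth _ _ (X + _)](size_nseq nin 0).
rewrite (@nth_fold_gate _ _ Fd 0 _ (nseq nin 0) _ (Gate [::] (fun _ => false)) Hj).
rewrite nth_gates ?index_mem // nth_index // /Fd.
rewrite -(subnK Hpos) addn1 ltnS.
apply/bigmax_leqP_seq => w Hw _.
rewrite -(@nth_fold_take _ _ Fd 0 _ _ _ _ (ltnW Hj)); last by rewrite size_nseq ins_ok.
move: Hw => /mapP [s]; rewrite mem_pmap map_id => Hs ->.
have := refs (o := Some s) (g := g); rewrite -mem_L => /(_ Hg Hs).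
case: s Hs => [i|w'] Hs /=.
  move=> Hi. rewrite nth_fold_pre ?size_nseq // nth_nseq Hi. by [].
case; rewrite -mem_L => Hw' Hr' _.
have := IH w'. rewrite -/(stp Fd) => /(_ _ Hw'). rewrite -/(wire_depths circ).
move=> H. have H2 : rank w' <= r by lia.
have := H H2. lia.
Qed.

Lemma size_lins g : size (lins g) <= 4.
Proof. case: g => [[[t h] a] j].
case: t => [|[|[|[|[|[|[|t]]]]]]] /=; try (case: h => //); try (case: eqP => //). Qed.

Definition rlist (w : lab) : seq lab :=
  let: (t, h, a, j) := w in
  [seq (x, j') | x <- [seq (y, a') | y <- [seq (t', h') | t' <- iota 0 7,
      h' <- [:: h.+1; h; h.-1]], a' <- [:: a./2; a; a.+1; a.*2; a.*2.+1]],
      j' <- [:: 0; j; j.+1]].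

Lemma size_rlist w : size (rlist w) = 315.
Proof. by case: w => [[[t h] a] j]. Qed.

Lemma reader_rlist w g : reader w g -> g \in rlist w.
Proof.
case: w => [[[t h] a] j]; case: g => [[[t' h'] a'] j'] /and4P [Ht Hh Ha Hj].
rewrite /rlist. apply: allpairs_f => //. apply: allpairs_f => //. apply: allpairs_f => //.
by rewrite mem_iota.
Qed.

Lemma fan_gen (s : seq lab) (f : lab -> nat) (R : seq lab) m :
  uniq s -> (forall g, g \in s -> 0 < f g -> g \in R) -> (forall g, g \in s -> f g <= m) ->
  sumn (map f s) <= m * size R.
Proof.
move=> Hu HR Hm.
have H1 : sumn (map f s) <= m * count (mem R) s.
  elim: s Hu HR Hm => [|x s IH] //= /andP [Hx Hu] HR Hm.
  have Hsub : forall g, g \in s -> g \in x :: s by move=> g Hg; rewrite inE Hg orbT.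
  have IH' := IH Hu (fun g Hg => HR g (Hsub g Hg)) (fun g Hg => Hm g (Hsub g Hg)).
  have Hfx := Hm x (mem_head _ _).
  case Hin: (x \in R) => /=.
    rewrite mulnDr muln1; exact: leq_add.
  have Hf0 : f x = 0.
    by case: (posnP (f x)) => // Hp; have := HR x (mem_head _ _) Hp; rewrite Hin.
  by rewrite Hf0.
apply: (leq_trans H1); rewrite leq_mul2l -size_filter; apply/orP; right.
apply: uniq_leq_size; first exact: filter_uniq.
by move=> x; rewrite mem_filter => /andP [].
Qed.

Lemma fan_circ : bounded_fan 1260 circ.
Proof.
split.
- rewrite /circ /= all_map; apply/allP => g' _ /=.
  rewrite size_map size_pmap. apply: leq_trans (count_size _ _) _.
  by apply: leq_trans (size_lins g') _.
- move=> j; rewrite size_map => Hj.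
  set w := nth (0,0,0,0) L j.
  have Hw : w \in L by rewrite mem_nth.
  have Ej : j = index w L by rewrite index_uniq // uniq_L.
  rewrite -map_comp Ej.
  have -> : 1260 = 4 * size (rlist w) by rewrite size_rlist.
  apply: fan_gen; first exact: uniq_L.
  + move=> g Hg; rewrite /= -has_count => /hasP [x /mapP [s]].
    rewrite mem_pmap map_id => Hs -> /eqP E.
    have := refs (o := Some s) (g := g); rewrite -mem_L => /(_ Hg Hs).
    case: s Hs E => [i|w'] Hs /= E.
      rewrite E; lia.
    case; rewrite -mem_L => Hw' _ Hrd.
    have Ew : w' = w.
      by rewrite -(nth_index (0,0,0,0) Hw') -(nth_index (0,0,0,0) Hw); congr nth; lia.
    by subst w'; apply: reader_rlist.
  + move=> g _ /=. apply: leq_trans (count_size _ _) _.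
    rewrite size_map size_pmap. apply: leq_trans (count_size _ _) _.
    exact: size_lins.
Qed.
End Cons.

Lemma sumn_const (T : Type) (s : seq T) c : sumn [seq c | _ <- s] = size s * c.
Proof. by elim: s => //= _ s ->; rewrite mulSn. Qed.

Lemma sumn_mul2 (T : Type) (s : seq T) f : sumn [seq 2 * f x | x <- s] = 2 * sumn [seq f x | x <- s].
Proof. by elim: s => //= x s ->; rewrite mulnDr. Qed.

Lemma size_flat_map (T U : Type) (F : T -> seq U) s :
  size (flatten (map F s)) = sumn [seq size (F x) | x <- s].
Proof. by elim: s => //= x s IH; rewrite size_cat IH. Qed.

Definition SS K := sumn [seq 2 ^ (K - h) * h.+2 | h <- iota 0 K.+1].

Lemma SS_bound K : SS K + K + 4 <= 6 * 2 ^ K.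
Proof.
elim: K => [|K IH]; first by [].
rewrite /SS.
have -> : iota 0 K.+2 = iota 0 K.+1 ++ [:: K.+1] by rewrite -addn1 iotaD.
rewrite map_cat sumn_cat.
have -> : [seq 2 ^ (K.+1 - h) * h.+2 | h <- iota 0 K.+1] = [seq 2 * (2 ^ (K - h) * h.+2) | h <- iota 0 K.+1].
  apply/eq_in_map => h; rewrite mem_iota add0n => Hh.
  by rewrite subSn // expnS mulnA.
rewrite sumn_mul2 -/(SS K) expnS /= subnn expn0. lia.
Qed.

Lemma size_Ldep n : size (Ldep n) = 7 * SS (nbits n).
Proof.
rewrite /Ldep size_flat_map.
under eq_map => t do rewrite size_flat_map.
under eq_map => t do under eq_map => h do rewrite size_flat_map.
under eq_map => t do under eq_map => h do under eq_map => a do rewrite size_map size_iota.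
under eq_map => t do under eq_map => h do rewrite sumn_const size_iota.
by rewrite sumn_const size_iota.
Qed.

Lemma pow_nbits n : 2 ^ nbits n <= 2 * n.+1.
Proof.
rewrite /nbits expnS leq_mul2l /=.
case: (posnP n) => [->|Hn]; first by rewrite trunc_log0.
by apply: leq_trans (trunc_logP (isT : 1 < 2) Hn) _.
Qed.

Lemma size_circ n : size_circuit (circ n) <= 84 * n.+1.
Proof.
rewrite /size_circuit /circ /= size_map size_sort.
apply: leq_trans (size_undup _) _. rewrite size_Ldep.
have := SS_bound (nbits n). have := pow_nbits n. lia.
Qed.

Lemma step h l op_ s (zp op : bool) (rp sb T B NZ : nat -> bool) zs os :
  (zp -> l <= op_) -> (op -> op_ + 2 ^ h.+1 <= l) ->
  (~~ zp -> ~~ op -> [/\ op_ <= l, l < op_ + 2 ^ h.+1 & val h.+2 rp = l - op_]) ->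
  s <= 2 ^ h -> val h.+2 sb = s ->
  (forall j, j < h.+2 -> T j = rp j (+) sb j (+) cin B j) ->
  (forall j, j < h.+2 -> B j = (~~ rp j && (sb j || cin B j)) || (sb j && cin B j)) ->
  (forall j, j <= h.+1 -> NZ j = cin NZ j || T j) ->
  zs = zp || (~~ op && (T h.+1 || ~~ NZ h.+1)) ->
  os = op || [&& ~~ zp, ~~ T h.+1 & T h] ->
  [/\ zs -> l <= op_ + s, os -> op_ + s + 2 ^ h <= l &
      ~~ zs -> ~~ os -> [/\ op_ + s <= l, l < op_ + s + 2 ^ h & val h.+1 T = l - (op_ + s)]].
Proof.
move=> Hz Ho Hm Hs Hsb HT HB HNZ -> ->.
have E1 := subtr HT HB. rewrite Hsb in E1.
rewrite (nzchain HNZ) (val_topbit h.+1 T) (val_topbit h T).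
have E3 := valS h.+1 T.
have L1 := val_lt h.+1 T.
have L2 := val_lt h.+2 rp.
have L3 := val_lt h.+2 T.
rewrite (val_topbit h.+1 T) in E3.
move: E1 E3 L1 L2 L3 Hz Ho Hm Hs.
set v1 := val h.+1 T; set v2 := val h.+2 T; set r := val h.+2 rp.
rewrite !expnS. set p := 2 ^ h.
case: (cin B h.+2); case: zp; case: op => /= E1 E3 L1 L2 L3 Hz Ho Hm Hs.
all: case: (leqP (2 * p) v2) E3 => H1 E3 /=.
all: case: (leqP p v1) => H2 /=.
all: case: (ltnP 0 v2) => H3 /=.
all: try (have [Hm1 Hm2 Hm3] := Hm isT isT).
all: split => //= HA; try split => //; try lia; try (move=> HB; split; lia).
Qed.

Lemma val_false m : val m (fun _ => false) = 0.
Proof. by rewrite /val big1. Qed.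

Lemma count_take (x : seq bool) i : count id (take i x) = \sum_(0 <= j < i) nth false x j.
Proof.
elim: x i => [|b x IH] i /=.
  by rewrite big1 // => j _; rewrite nth_nil.
case: i => [|i] /=; first by rewrite big_geq.
by rewrite big_nat_recl //= IH.
Qed.

Lemma sum_bits_le (F : nat -> bool) m k : \sum_(m <= i < m + k) F i <= k.
Proof.
apply: (@leq_trans (\sum_(m <= i < m + k) 1)).
  by apply: leq_sum => i _; case: (F i).
by rewrite sum_nat_const_nat addKn muln1.
Qed.

Section Sem.
Variables (n : nat) (x : seq bool) (l : nat).
Hypotheses (Hx : size x = n) (Hl : l <= n).
Local Notation K := (nbits n).
Definition inp := x ++ bin K l.

Lemma Hinp : size inp = nin n.
Proof. by rewrite /inp size_cat size_map size_iota Hx. Qed.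

Local Notation V := (V n inp).
Local Notation ov := (ov n inp).
Definition X i := nth false x i.
Definition csum h a := \sum_(a * 2 ^ h <= i < a * 2 ^ h + 2 ^ h) X i.
Definition off h a := \sum_(0 <= i < a * 2 ^ h) X i.
Definition cv h a j := ov (cnt n h a j).

Lemma nK : n < 2 ^ K.
Proof. by have := trunc_log_ltn n (isT : 1 < 2). Qed.

Lemma inp_x i : i < n -> nth false inp i = X i.
Proof. move=> Hi; by rewrite /inp nth_cat Hx Hi. Qed.

Lemma inp_l j : j < K -> nth false inp (n + j) = odd (l %/ 2 ^ j).
Proof. move=> Hj. rewrite /inp nth_cat Hx ltnNge leq_addr /= addKn.
by rewrite /bin (nth_map 0) ?size_iota // nth_iota. Qed.

Lemma geq (g : lab) : inL n g -> V g = fn g [seq ov o | o <- lins n g].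
Proof. move=> H; apply: gate_eq; [exact: Hinp | by rewrite mem_L]. Qed.

Lemma ov_chain t h a j : ov (chain t h a j) = cin (fun j => V (t, h, a, j)) j.
Proof. by case: j. Qed.

Lemma csum_split h a : csum h.+1 a = csum h a.*2 + csum h a.*2.+1.
Proof.
rewrite /csum.
have E1 : a * 2 ^ h.+1 = a.*2 * 2 ^ h by rewrite expnS; lia.
have E2 : a.*2.+1 * 2 ^ h = a.*2 * 2 ^ h + 2 ^ h by lia.
have E3 : a * 2 ^ h.+1 + 2 ^ h.+1 = a.*2.+1 * 2 ^ h + 2 ^ h by rewrite expnS; lia.
rewrite E3 E1 E2 (big_cat_nat _ (n := a.*2 * 2 ^ h + 2 ^ h)) //=; lia.
Qed.

Lemma csum_le h a : csum h a <= 2 ^ h.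
Proof. exact: sum_bits_le. Qed.

Lemma cnt_ok h : h <= K -> forall a, a < 2 ^ (K - h) ->
  val h.+1 (cv h a) = csum h a /\ (forall j, h < j -> cv h a j = false).
Proof.
elim: h => [|h IH] Hh a Ha.
  split; last by case.
  rewrite valS val0 /cv /= /csum expn0 muln1 addn1 big_nat1 add0n muln1.
  case: ltnP => H /=; first by rewrite inp_x.
  by rewrite /X nth_default // Hx.
have Ha2 := @pow_dbl n h a Hh Ha.
have [IH1 IH2] := IH (ltnW Hh) a.*2 (ltnW Ha2).
have [IH3 IH4] := IH (ltnW Hh) a.*2.+1 Ha2.
set S := fun j => V (0, h.+1, a, j). set C := fun j => V (1, h.+1, a, j).
have HS : forall j, j < h.+2 -> S j = cv h a.*2 j (+) cv h a.*2.+1 j (+) cin C j.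
  move=> j Hj; rewrite /S geq /=; last by rewrite Hh Ha; lia.
  by rewrite ov_chain.
have HC : forall j, j < h.+2 -> C j = [|| cv h a.*2 j && cv h a.*2.+1 j, cv h a.*2 j && cin C j | cv h a.*2.+1 j && cin C j].
  move=> j Hj; rewrite /C geq /=; last by rewrite Hh Ha; lia.
  by rewrite ov_chain.
have Ad := @adder h.+1 _ _ _ _ (fun j Hj => HS j (ltnW Hj)) (fun j Hj => HC j (ltnW Hj)).
split; last first.
  by move=> j Hj; rewrite /cv /= leqNgt Hj.
rewrite (@eq_val _ _ S); last by move=> j Hj; rewrite /cv /= -ltnS Hj.
by rewrite valS HS // IH2 // IH4 // /= -Ad IH1 IH3 csum_split.
Qed.

Lemma off_split h a : off h a = off h.+1 a./2 + (if odd a then csum h a.-1 else 0).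
Proof.
rewrite /off /csum.
have Ea := odd_double_half a.
have E1 : a./2 * 2 ^ h.+1 = a./2.*2 * 2 ^ h by rewrite expnS; lia.
rewrite E1.
case: (odd a) Ea => /= Ea.
  have E2 : a.-1 = a./2.*2 by lia.
  have E3 : a * 2 ^ h = a./2.*2 * 2 ^ h + 2 ^ h by rewrite -{1}Ea; lia.
  by rewrite E2 E3 (big_cat_nat _ (n := a./2.*2 * 2 ^ h)) //= leq_addr.
by rewrite -{1}Ea add0n addn0.
Qed.

Definition Inv h a :=
  [/\ V (5, h, a, 0) -> l <= off h a, V (6, h, a, 0) -> off h a + 2 ^ h <= l &
      ~~ V (5, h, a, 0) -> ~~ V (6, h, a, 0) ->
      [/\ off h a <= l, l < off h a + 2 ^ h & val h.+1 (fun j => V (2, h, a, j)) = l - off h a]].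

Lemma inv_step h a op_ : h <= K -> a < 2 ^ (K - h) ->
  off h a = op_ + (if odd a then csum h a.-1 else 0) ->
  (ov (stsrc n 5 h a) -> l <= op_) -> (ov (stsrc n 6 h a) -> op_ + 2 ^ h.+1 <= l) ->
  (~~ ov (stsrc n 5 h a) -> ~~ ov (stsrc n 6 h a) ->
     [/\ op_ <= l, l < op_ + 2 ^ h.+1 & val h.+2 (fun j => ov (rpsrc n h a j)) = l - op_]) ->
  Inv h a.
Proof.
move=> Hh Ha Eoff Hz Ho Hm.
have Hs : (if odd a then csum h a.-1 else 0) <= 2 ^ h.
  by case: (odd a) => //; apply: csum_le.
have Hsb : val h.+2 (fun j => ov (if odd a then cnt n h a.-1 j else None)) =
           (if odd a then csum h a.-1 else 0).
  case: (odd a); last by rewrite (@eq_val _ _ (fun _ => false)) ?val_false.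
  have Ha1 : a.-1 < 2 ^ (K - h) by apply: leq_ltn_trans Ha; exact: leq_pred.
  have [H1 H2] := cnt_ok Hh Ha1.
  rewrite valS. change (val h.+1 (cv h a.-1) + cv h a.-1 h.+1 * 2 ^ h.+1 = csum h a.-1).
  by rewrite H2 // addn0 H1.
have HT : forall j, j < h.+2 -> V (2, h, a, j) =
   ov (rpsrc n h a j) (+) ov (if odd a then cnt n h a.-1 j else None) (+) cin (fun j => V (3, h, a, j)) j.
  move=> j Hj; rewrite geq /=; last by rewrite Hh Ha; lia.
  by rewrite ov_chain.
have HB : forall j, j < h.+2 -> V (3, h, a, j) =
   (~~ ov (rpsrc n h a j) && (ov (if odd a then cnt n h a.-1 j else None) || cin (fun j => V (3, h, a, j)) j))
   || (ov (if odd a then cnt n h a.-1 j else None) && cin (fun j => V (3, h, a, j)) j).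
  move=> j Hj; rewrite geq /=; last by rewrite Hh Ha; lia.
  by rewrite ov_chain.
have HNZ : forall j, j <= h.+1 -> V (4, h, a, j) = cin (fun j => V (4, h, a, j)) j || V (2, h, a, j).
  move=> j Hj; rewrite geq /=; last by rewrite Hh Ha; lia.
  by rewrite ov_chain.
have Hzs : V (5, h, a, 0) = ov (stsrc n 5 h a) || (~~ ov (stsrc n 6 h a) && (V (2, h, a, h.+1) || ~~ V (4, h, a, h.+1))).
  by rewrite geq //= Hh Ha /=.
have Hos : V (6, h, a, 0) = ov (stsrc n 6 h a) || [&& ~~ ov (stsrc n 5 h a), ~~ V (2, h, a, h.+1) & V (2, h, a, h)].
  by rewrite geq //= Hh Ha /=.
have [R1 R2 R3] := step Hz Ho Hm Hs Hsb HT HB HNZ Hzs Hos.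
by rewrite /Inv Eoff.
Qed.

Lemma st_ok k : forall h a, K - h = k -> h <= K -> a < 2 ^ (K - h) -> Inv h a.
Proof.
elim: k => [|k IH] h a Hk Hh Ha.
  have EK : h = K by lia.
  subst h. rewrite subnn expn0 ltnS leqn0 in Ha. move/eqP: Ha => Ha; subst a.
  apply: (@inv_step K 0 0) => //.
  - by rewrite subnn.
  - by rewrite /off mul0n big_geq.
  - by rewrite /stsrc eqxx.
  - by rewrite /stsrc eqxx.
  rewrite /stsrc eqxx /= => _ _; split => //.
    rewrite add0n; apply: (leq_ltn_trans Hl); apply: (ltn_trans nK); by rewrite ltn_exp2l.
  rewrite subn0 (@eq_val _ _ (fun j => if j < K then odd (l %/ 2 ^ j) else false)); last first.
    move=> j _; rewrite /rpsrc eqxx; case: ltnP => // Hj /=; exact: inp_l.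
  have E : ((nbits n).+1 < nbits n) = false by lia.
  rewrite (valS (nbits n).+1) (valS (nbits n)) ltnn E /= !addn0 (@eq_val _ _ (fun j => odd (l %/ 2 ^ j))); last first.
    by move=> j ->.
  have := val_bits K l. rewrite divn_small; first by rewrite mul0n addn0.
  exact: leq_ltn_trans Hl nK.
have HhK : h < K by lia.
have Ha2 := pow_half HhK Ha.
have Hk' : K - h.+1 = k by lia.
have [P1 P2 P3] := IH h.+1 a./2 Hk' HhK Ha2.
have HKh : (h == K) = false by apply/eqP; lia.
apply: (@inv_step h a (off h.+1 a./2)) => //.
- exact: off_split.
- by rewrite /stsrc HKh.
- by rewrite /stsrc HKh.
- rewrite /stsrc HKh /= => H1 H2.
  have [Q1 Q2 Q3] := P3 H1 H2. split => //.
  rewrite -Q3; apply: eq_val => j _; by rewrite /rpsrc HKh.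
Qed.

Lemma out_ok i : i < n -> nth false (eval_circuit (circ n) inp) i = (count id (take i x) < l).
Proof.
move=> Hi.
rewrite /eval_circuit /circ /= (nth_map 0) ?size_map ?size_iota // (nth_map 0) ?size_iota // nth_iota // add0n.
change (V (6, 0, i, 0) = (count id (take i x) < l)).
have Hi2 : i < 2 ^ (K - 0) by rewrite subn0; apply: ltn_trans Hi nK.
have [I1 I2 I3] := st_ok (erefl _) (leq0n _) Hi2.
have Eo : off 0 i = count id (take i x) by rewrite /off expn0 muln1 count_take.
rewrite Eo expn0 in I1 I2 I3.
case: (V (6, 0, i, 0)) I2 I3 => /= [H _|_ H]; first by lia.
case: (V (5, 0, i, 0)) I1 H => /= [H _|_ H]; first by lia.
have [H1 H2 _] := H isT isT. lia.
Qed.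
End Sem.

Lemma depth_circ n : depth (circ n) <= 9 * (trunc_log 2 n).+1.
Proof.
rewrite /depth; apply/bigmax_leqP_seq => w /mapP [i]; rewrite mem_iota add0n => Hi -> _ /=.
have Hg : (6, 0, i, 0) \in L n.
  rewrite mem_L /= leq0n subn0 /= andbT; apply: ltn_trans Hi (nK n).
apply: leq_trans (depth_le Hg) _.
rewrite /= /Base /nbits; lia.
Qed.

Theorem mainTheorem10 :
  exists (c A B : nat), forall n : nat, exists C : circuit,
    [/\ wf_circuit C, bounded_fan c C, solves_b2u n C,
        size_circuit C <= A * n.+1 & depth C <= B * (trunc_log 2 n).+1].
Proof.
exists 1260, 84, 9 => n; exists (circ n); split.
- exact: wf_circ.
- exact: fan_circ.
- split; first by [].
  split; first by rewrite /circ /= size_map size_iota.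
  move=> x l Hx Hl /= i Hi _. exact: out_ok.
- exact: size_circ.
- exact: depth_circ.
Qed.
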